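(* Let $X,Y$ be real Hilbert spaces and $A\colon X\to Y$ compact linear with singular system $(\sigma_i,u_i,v_i)_{i\ge1}$, $\sigma_i>0$. Let $N\ge1$ and $x^\dagger=\sum_{i=1}^N c_iv_i$ with $c_i=\langle x^\dagger,v_i\rangle\neq0$ for $i=1,\dots,N$. Let $y^\delta=Ax^\dagger+\eta$ where $\eta$ is a $Y$-valued random variable such that the coefficients $\eta_i=\langle\eta,u_i\rangle$ satisfy $\mathbb E[\eta_i]=0$ and $\mathbb E[\eta_i^2]=\beta_{\eta,i}^2<\infty$ for all $i$. For $M\in\mathbb N$ let $E_M=T^{(M)}_\alpha y^\delta-x^\dagger$. If $\alpha>0$ satisfies $$2\alpha\ge\max\Big\{0,\ \max_{0\le m<N}\Big(\frac{\beta_{\eta,m+1}^2}{c_{m+1}^2}-\sigma_{m+1}^2\Big)\Big\},$$ then $\mathbb E\big[\|E_N\|^2\big]\le\mathbb E\big[\|E_M\|^2\big]$ for all $M\in\mathbb N$.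
   Context: The singular system means $Ax=\sum_i\sigma_i\langle x,v_i\rangle u_i$ with $(v_i)$, $(u_i)$ orthonormal families. The truncated Tikhonov regularization is $T^{(M)}_\alpha y=\sum_{i=1}^M\frac{\sigma_i}{\sigma_i^2+\alpha}\langle y,u_i\rangle v_i$ (for $M=0$ the empty sum, i.e. $T^{(0)}_\alpha=0$). *)

(* Defs.v *)
From HB Require Import structures.
From mathcomp Require Import all_boot all_order all_algebra.
From mathcomp Require Import all_classical all_reals all_analysis.
Set Implicit Arguments. Unset Strict Implicit. Unset Printing Implicit Defensive.
Import Order.TTheory GRing.Theory Num.Theory.
Import numFieldNormedType.Exports.
Local Open Scope classical_set_scope.
Local Open Scope ring_scope.

(* [ip] is an inner product on the real normed space X inducing its norm.
   Together with X being a completeNormedModType this makes X a real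
   Hilbert space. *)
Definition inner_product (R : realType) (X : normedModType R)
  (ip : X -> X -> R) : Prop :=
  [/\ forall x y : X, ip x y = ip y x,
      forall (a : R) (x y z : X), ip (a *: x + y) z = a * ip x z + ip y z
    & forall x : X, `|x| = Num.sqrt (ip x x)].

Definition orthonormal (R : realType) (X : normedModType R)
  (ip : X -> X -> R) (v : nat -> X) : Prop :=
  forall i j : nat, ip (v i) (v j) = (i == j)%:R.

Definition compact_operator (R : realType) (X Y : normedModType R)
  (A : X -> Y) : Prop :=
  compact (closure (A @` [set x : X | `|x| <= 1])).

(* singular system (sigma_i, u_i, v_i)_{i>=1}, indexed here by i : nat from 0
   (index i here stands for i+1 of the paper):
   A x = sum_i sigma_i <x, v_i> u_i (norm-convergent series in Y). *)
Definition singular_system (R : realType) (X Y : normedModType R)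
  (ipX : X -> X -> R) (ipY : Y -> Y -> R) (A : X -> Y)
  (sigma : nat -> R) (u : nat -> Y) (v : nat -> X) : Prop :=
  [/\ orthonormal ipX v, orthonormal ipY u, (forall i, 0 < sigma i)
    & forall x : X,
        (fun n : nat => \sum_(i < n) (sigma i * ipX x (v i)) *: u i) @ \oo
          --> A x].

Definition trunc_tikhonov (R : realType) (X Y : normedModType R)
  (ipY : Y -> Y -> R) (sigma : nat -> R) (u : nat -> Y) (v : nat -> X)
  (M : nat) (alpha : R) (y : Y) : X :=
  \sum_(i < M) (sigma i / (sigma i ^+ 2 + alpha) * ipY y (u i)) *: v i.

(* Main.v *)
Require Import Defs.
From HB Require Import structures.
From mathcomp Require Import all_boot all_order all_algebra.
From mathcomp Require Import all_classical all_reals all_analysis.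
From mathcomp Require Import measurable_realfun ring lra.
Import Order.TTheory GRing.Theory Num.Theory.
Import numFieldNormedType.Exports.
Local Open Scope classical_set_scope.
Local Open Scope ring_scope.
Lemma exp_sq (R : realType) (d : measure_display) (T : measurableType d) (P : probability T R)
  (e : T -> R) (b p q : R) :
  measurable_fun setT e ->
  (\int[P]_w (e w)%:E = 0)%E ->
  (\int[P]_w ((e w) ^+ 2)%:E = (b ^+ 2)%:E)%E ->
  P.-integrable setT (fun w => ((p + q * e w) ^+ 2)%:E) /\
  (\int[P]_w ((p + q * e w) ^+ 2)%:E = (p ^+ 2 + q ^+ 2 * b ^+ 2)%:E)%E.
Proof.
move=> me e0 e2.
have me2 : measurable_fun setT (fun w => e w ^+ 2).
  exact: measurable_funX.
have i2 : P.-integrable setT (fun w => ((e w) ^+ 2)%:E).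
  apply/integrableP; split; first exact/measurable_EFinP.
  under eq_integral do rewrite /= ger0_norm ?sqr_ge0//.
  by rewrite e2 ltry.
have ic : forall k : R, P.-integrable setT (fun w => k%:E).
  move=> k; exact: (finite_measure_integrable_cst _ k measurableT).
have i1 : P.-integrable setT (fun w => (e w)%:E).
  apply: (le_integrable measurableT _ _ (integrableD measurableT (ic 1) i2)).
    exact/measurable_EFinP.
  move=> x _ /=; rewrite lee_fin.
  rewrite (ger0_norm (_ : 0 <= 1 + e x ^+ 2)); last by rewrite addr_ge0 ?sqr_ge0.
  have := sqr_ge0 (`|e x| - 1); rewrite -real_normK ?num_real // => h.
  have h2 : 0 <= `|e x| by [].
  rewrite -[e x ^+ 2]real_normK ?num_real //. nra.
have E : (fun w => ((p + q * e w) ^+ 2)%:E) =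
   (fun w => (p ^+ 2)%:E + ((2 * p * q)%:E * (e w)%:E + (q ^+ 2)%:E * ((e w) ^+ 2)%:E))%E.
  apply: funext => w; rewrite -!EFinM -!EFinD; congr EFin; ring.
rewrite E; split.
  apply: integrableD => //; apply: integrableD => //; exact: integrableZl.
rewrite integralD //; last by apply: integrableD => //; exact: integrableZl.
rewrite integralD //; try exact: integrableZl.
rewrite !integralZl // e0 e2.
rewrite (integral_cst P measurableT (p ^+ 2)%:E).
rewrite [X in (_ * X + _)%E](_ : _ = 1%E); last exact: probability_setT.
by rewrite mule1 mule0 add0e -EFinM -EFinD.
Qed.
Set Implicit Arguments.
Section H.
Variables (R : realType) (X : normedModType R) (ip : X -> X -> R).
Hypothesis hip : inner_product ip.

Lemma ip0 z : ip 0 z = 0.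
Proof.
case: hip => _ hl _; have := hl 1 0 0 z.
rewrite scale1r addr0 mul1r => h; lra.
Qed.

Lemma ipD x y z : ip (x + y) z = ip x z + ip y z.
Proof. by case: hip => _ hl _; rewrite -{1}[x]scale1r hl mul1r. Qed.

Lemma ipZ a x z : ip (a *: x) z = a * ip x z.
Proof. by case: hip => _ hl _; rewrite -[a *: x]addr0 hl ip0 addr0. Qed.

Lemma ip_sum (I : Type) (s : seq I) (F : I -> X) z :
  ip (\sum_(i <- s) F i) z = \sum_(i <- s) ip (F i) z.
Proof.
elim: s => [|a s IH]; first by rewrite !big_nil ip0.
by rewrite !big_cons ipD IH.
Qed.

Lemma ip_self x : ip x x = `|x| ^+ 2.
Proof.
case: hip => _ _ hn; rewrite hn sqr_sqrtr //.
case: (leP 0 (ip x x)) => // hlt.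
have : `|x| = 0 by rewrite hn ler0_sqrtr // ltW.
move/normr0_eq0 => x0; move: hlt; by rewrite x0 ip0 ltxx.
Qed.

Lemma ip_ortho (v : nat -> X) K (a : nat -> R) j : Defs.orthonormal ip v ->
  ip (\sum_(i < K) a i *: v i) (v j) = if (j < K)%N then a j else 0.
Proof.
move=> ho; rewrite ip_sum.
under eq_bigr do rewrite ipZ ho.
case: ifP => hj.
  rewrite (bigD1 (Ordinal hj)) //= eqxx mulr1 big1 ?addr0 //.
  move=> i hi; case: eqP => [e|]; last by rewrite mulr0.
  by move: hi; rewrite -val_eqE /= e eqxx.
rewrite big1 // => i _; case: eqP => [e|]; last by rewrite mulr0.
by move: hj; rewrite -e ltn_ord.
Qed.

Lemma norm_ortho (v : nat -> X) K (a : nat -> R) : Defs.orthonormal ip v ->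
  `|\sum_(i < K) a i *: v i| ^+ 2 = \sum_(i < K) a i ^+ 2.
Proof.
move=> ho; rewrite -ip_self.
case: hip => hs _ _.
rewrite ip_sum; apply: eq_bigr => i _.
by rewrite ipZ hs ip_ortho // ltn_ord expr2.
Qed.
End H.

Lemma Av (R : realType) (X Y : normedModType R) (ipX : X -> X -> R) (ipY : Y -> Y -> R)
  (A : X -> Y) (sigma : nat -> R) (u : nat -> Y) (v : nat -> X) j :
  singular_system ipX ipY A sigma u v -> A (v j) = sigma j *: u j.
Proof.
case=> hv hu hs hA.
have h2 : (fun n : nat => \sum_(i < n) (sigma i * ipX (v j) (v i)) *: u i) @ \oo
          --> sigma j *: u j.
  apply: cvg_near_cst; exists j.+1 => // n /= hn.
  rewrite (bigD1 (Ordinal hn)) //= hv eqxx mulr1 big1 ?addr0 //.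
  move=> i hi; rewrite hv; case: eqP => [e|]; last by rewrite mulr0 scale0r.
  by move: hi; rewrite -val_eqE /= e eqxx.
exact: (cvg_unique _ (hA (v j)) h2).
Qed.

Theorem theorem3 (R : realType)
  (X Y : completeNormedModType R) (ipX : X -> X -> R) (ipY : Y -> Y -> R)
  (A : {linear X -> Y}) (sigma : nat -> R) (u : nat -> Y) (v : nat -> X)
  (N : nat) (xdag : X)
  (d : measure_display) (T : measurableType d) (P : probability T R)
  (eta : T -> Y) (beta : nat -> R) (alpha : R) :
  inner_product ipX -> inner_product ipY ->
  compact_operator A ->
  singular_system ipX ipY A sigma u v ->
  (1 <= N)%N ->
  xdag = \sum_(i < N) ipX xdag (v i) *: v i ->
  (forall i : nat, (i < N)%N -> ipX xdag (v i) != 0) ->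
  (forall i : nat, measurable_fun setT (fun w => ipY (eta w) (u i))) ->
  (forall i : nat, (\int[P]_w (ipY (eta w) (u i))%:E = 0)%E) ->
  (forall i : nat, (\int[P]_w ((ipY (eta w) (u i)) ^+ 2)%:E = (beta i ^+ 2)%:E)%E) ->
  0 < alpha ->
  \big[Num.max/0]_(m < N)
      (beta m ^+ 2 / (ipX xdag (v m)) ^+ 2 - sigma m ^+ 2) <= 2 * alpha ->
  forall M : nat,
    (\int[P]_w (`| trunc_tikhonov ipY sigma u v N alpha (A xdag + eta w) - xdag | ^+ 2)%:E
     <= \int[P]_w (`| trunc_tikhonov ipY sigma u v M alpha (A xdag + eta w) - xdag | ^+ 2)%:E)%E.
Proof.
move=> hX hY _ ss hN hx hc hm h0 h2 ha hmax M.
have [ho hou hs _] := ss.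
set c := fun i => ipX xdag (v i).
set e := fun i w => ipY (eta w) (u i).
have Ax : A xdag = \sum_(i < N) (sigma i * c i) *: u i.
  rewrite {1}hx linear_sum; apply: eq_bigr => i _.
  by rewrite linearZ (Av i ss) /= scalerA mulrC.
have yi : forall w i, ipY (A xdag + eta w) (u i) =
    (if (i < N)%N then sigma i * c i else 0) + e i w.
  by move=> w i; rewrite (ipD hY) Ax (ip_ortho hY (v:=u) N (fun i => sigma i * c i)) //.
set t := fun i => sigma i / (sigma i ^+ 2 + alpha).
set p := fun M i => (if (i < M)%N then t i * (if (i < N)%N then sigma i * c i else 0) else 0)
                     - (if (i < N)%N then c i else 0).
set q := fun M i => if (i < M)%N then t i else 0.
have sc : forall b (x : R) i, (if b then x *: v i else 0) = (if b then x else 0) *: v i.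
  by case => x i; rewrite ?scale0r.
have key : forall M K, (maxn M N <= K)%N -> forall w,
   `|trunc_tikhonov ipY sigma u v M alpha (A xdag + eta w) - xdag| ^+ 2 =
   \sum_(i < K) (p M i + q M i * e i w) ^+ 2.
  move=> M' K hK w; rewrite -(norm_ortho hX (v:=v) K (fun i => p M' i + q M' i * e i w)) //; congr (`|_| ^+ 2).
  rewrite /trunc_tikhonov [X in _ - X]hx.
  rewrite (big_ord_widen K (fun i => (sigma i / (sigma i ^+ 2 + alpha) *
        ipY (A xdag + eta w) (u i)) *: v i)); last by apply: leq_trans hK; exact: leq_maxl.
  rewrite (big_ord_widen K (fun i => ipX xdag (v i) *: v i)); last by apply: leq_trans hK; exact: leq_maxr.
  rewrite big_mkcond [X in _ - X]big_mkcond /= -sumrB; apply: eq_bigr => i _.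
  rewrite !sc -scalerBl; congr (_ *: _).
  rewrite yi /p /q /t /c; case: ifP => _; case: ifP => _; ring.
have int : forall M K, (maxn M N <= K)%N ->
   (\int[P]_w (`| trunc_tikhonov ipY sigma u v M alpha (A xdag + eta w) - xdag | ^+ 2)%:E
    = (\sum_(i < K) (p M i ^+ 2 + q M i ^+ 2 * beta i ^+ 2))%:E)%E.
  move=> M' K hK.
  under eq_integral do rewrite (key M' K hK) -sumEFin.
  rewrite integral_sum //; last first.
    by move=> i; case: (@exp_sq _ _ _ P _ _ (p M' i) (q M' i) (hm i) (h0 i) (h2 i)).
  rewrite -sumEFin; apply: eq_bigr => i _.
  by case: (@exp_sq _ _ _ P _ _ (p M' i) (q M' i) (hm i) (h0 i) (h2 i)).
rewrite (int N (maxn M N)); last by rewrite maxnn leq_maxr.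
rewrite (int M (maxn M N)) // lee_fin; apply: ler_sum => i _.
rewrite /p /q.
case: (ltnP i N) => hiN /=; last first.
  case: ifP => _; rewrite ?mulr0 ?subr0 ?expr0n /= ?mul0r ?addr0 //.
  by rewrite add0r mulr_ge0 ?sqr_ge0.
case: ifP => _; first by [].
rewrite sub0r sqrrN expr0n /= mul0r addr0.
have hci : c i != 0 := hc i hiN.
have hsi : 0 < sigma i := hs i.
have hD : 0 < sigma i ^+ 2 + alpha by rewrite addr_gt0 // exprn_gt0.
have hb : beta i ^+ 2 / c i ^+ 2 - sigma i ^+ 2 <= 2 * alpha.
  apply: le_trans hmax.
  exact: (le_bigmax _ _ (Ordinal hiN)).
have hb2 : beta i ^+ 2 <= (sigma i ^+ 2 + 2 * alpha) * c i ^+ 2.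
  have hc2 : 0 < c i ^+ 2 by rewrite lt0r sqr_ge0 sqrf_eq0 hci.
  rewrite -ler_pdivrMr //; lra.
rewrite -subr_ge0.
have -> : c i ^+ 2 - ((t i * (sigma i * c i) - c i) ^+ 2 + t i ^+ 2 * beta i ^+ 2)
   = sigma i ^+ 2 * ((sigma i ^+ 2 + 2 * alpha) * c i ^+ 2 - beta i ^+ 2)
      / (sigma i ^+ 2 + alpha) ^+ 2.
  rewrite /t; field; by rewrite gt_eqF.
by rewrite divr_ge0 ?sqr_ge0 // mulr_ge0 ?sqr_ge0 // subr_ge0.
Qed.
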